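(* Let $n\in\mathbb{N}$, $\varkappa\in\mathbb{N}^n$, $N=|\varkappa|$. Then $\det M(y,\varkappa)=\det G_\emptyset(y,\varkappa)$.
   Context: $\operatorname{e}_m$ is the elementary symmetric polynomial of degree $m$, zero for $m<0$ or $m$ larger than the number of variables. For a list of nonnegative integers $\mu$, $y^{[\mu]}$ is the list in which $y_1$ is repeated $\mu_1$ times, then $y_2$ repeated $\mu_2$ times, etc.; $b_q$ is the $q$th standard unit vector in $\mathbb{Z}^n$. Each $p\in\{1,\ldots,N\}$ is written uniquely as $p=\varkappa_1+\cdots+\varkappa_{q-1}+r$ with $1\le q\le n$, $1\le r\le\varkappa_q$. $M(y,\varkappa)$ is the $N\times N$ matrix with $M(y,\varkappa)_{k,p}=(-1)^{N-k-r+1}\operatorname{e}_{N-k-r+1}(y^{[\varkappa-rb_q]})$. $G_\emptyset(y,\varkappa)$ is the $N\times N$ confluent Vandermonde matrix with $(j,p)$ entry $\binom{N-j}{r-1}y_q^{N-j-r+1}$ if $N-j-r+1\ge0$ and $0$ otherwise. *)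

(* Defs.v *)
From mathcomp Require Import all_boot all_order all_algebra.
Set Implicit Arguments. Unset Strict Implicit. Unset Printing Implicit Defensive.
Import GRing.Theory.
Local Open Scope ring_scope.

Definition esym (R : comRingType) (m : nat) (s : seq R) : R :=
  \sum_(I : {set 'I_(size s)} | #|I| == m) \prod_(i in I) s`_i.

Definition yrep (R : comRingType) (n : nat) (y : n.-tuple R) (mu : seq nat)
  : seq R :=
  flatten [seq nseq (nth 0%N mu i) (nth 0 y i) | i <- iota 0 n].

(* Block decomposition, 0-based: for p0 (= p - 1), returns (q0, r0) with
   q0 = q - 1, r0 = r - 1 and p0 = kappa_0 + ... + kappa_(q0-1) + r0,
   r0 < kappa_(q0). *)
Fixpoint blk (s : seq nat) (p : nat) : nat * nat :=
  match s with
  | [::] => (0%N, p)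
  | k :: s' => if (p < k)%N then (0%N, p)
               else let qr := blk s' (p - k) in (qr.1.+1, qr.2)
  end.

(* kappa - r b_q, with 0-based q0 and r = r0 + 1 *)
Definition kappa_minus (n : nat) (kappa : n.-tuple nat) (q0 r : nat) : seq nat :=
  [seq (if i == q0 then nth 0%N kappa i - r else nth 0%N kappa i)%N
  | i <- iota 0 n].

(* M(y,kappa), 0-based indices k0 = k-1, p0 = p-1; the exponent
   N-k-r+1 becomes N - k0 - r0 - 1, negative iff ~~ (k0 + r0 < N). *)
Definition Mmat (R : comRingType) (n : nat) (y : n.-tuple R)
  (kappa : n.-tuple nat) : 'M[R]_(sumn kappa) :=
  let N := sumn kappa in
  \matrix_(k < N, p < N)
    let q0 := (blk kappa p).1 in let r0 := (blk kappa p).2 in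
    if (k + r0 < N)%N then
      (-1) ^+ (N - k - r0 - 1) *
        esym (N - k - r0 - 1) (yrep y (kappa_minus kappa q0 r0.+1))
    else 0.

(* Confluent Vandermonde G_emptyset(y,kappa), 0-based indices j0, p0:
   binom(N-j, r-1) y_q^(N-j-r+1) = 'C(N-j0-1, r0) y_q0^(N-j0-r0-1). *)
Definition Gmat (R : comRingType) (n : nat) (y : n.-tuple R)
  (kappa : n.-tuple nat) : 'M[R]_(sumn kappa) :=
  let N := sumn kappa in
  \matrix_(j < N, p < N)
    let q0 := (blk kappa p).1 in let r0 := (blk kappa p).2 in
    if (j + r0 < N)%N then
      ('C(N - j - 1, r0))%:R * (nth 0 y q0) ^+ (N - j - r0 - 1)
    else 0.

(* Main.v *)
Require Import Defs.
From mathcomp Require Import all_boot all_order all_algebra.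
From mathcomp Require Import zify ring.
Set Implicit Arguments. Unset Strict Implicit. Unset Printing Implicit Defensive.
Import GRing.Theory.
Local Open Scope ring_scope.
Section PolyPart.
Variable R : comNzRingType.
Implicit Types Q : {poly R}.

Lemma coefMXsubC_S Q (a : R) k :
  (Q * ('X - a%:P))`_k.+1 = Q`_k - a * Q`_k.+1.
Proof. by rewrite mulrBr coefB coefMX coefMC mulrC. Qed.

Lemma divX_base Q (a : R) (N i : nat) :
  (size (Q * ('X - a%:P))%R <= N.+1)%N ->
  Q`_i = \sum_(i <= k < N) (Q * ('X - a%:P))`_k.+1 * a ^+ (k - i).
Proof.
have [->|Q0] := eqVneq Q 0.
  by move=> _; rewrite coef0 mul0r big1 // => k _; rewrite coef0 mul0r.
rewrite size_Mmonic ?monicXsubC // size_XsubC addn2 /= ltnS => sQ.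
have [Ni|iN] := ltnP N i.
  by rewrite big_geq ?(ltnW Ni) // nth_default // (leq_trans sQ) // ltnW.
transitivity (\sum_(i <= k < N) ((- (Q`_k.+1 * a ^+ (k.+1 - i))) - (- (Q`_k * a ^+ (k - i))))).
  rewrite telescope_sumr // subnn expr0 mulr1 (nth_default _ sQ) mul0r oppr0 opprK add0r //.
apply: eq_big_nat => k /andP [ik kN].
rewrite coefMXsubC_S subSn // exprS; ring.
Qed.

Lemma tri_exch (F : nat -> nat -> R) i N :
  \sum_(i <= j < N) \sum_(j.+1 <= k < N) F j k =
  \sum_(i <= k < N) \sum_(i <= j < k) F j k.
Proof.
elim: N => [|N IH]; first by rewrite !big_geq.
have [Ni|iN] := ltnP N i.
  by rewrite !big_geq.
rewrite [in RHS]big_nat_recr //= -IH big_nat_recr //= [X in _ + X]big_geq // addr0.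
rewrite -big_split /=; apply: eq_big_nat => j /andP [_ jN].
by rewrite big_nat_recr.
Qed.

Lemma hockey i k r0 :
  \sum_(i <= j < k) 'C(k - j.+1, r0) = 'C(k - i, r0.+1).
Proof.
have [d Hd] : exists d, (k - i)%N = d by eexists.
elim: d i Hd => [|d IH] i Hd.
  rewrite big_geq; last by lia.
  by rewrite Hd bin0n.
rewrite big_ltn; last by lia.
rewrite IH; last by lia.
rewrite Hd binS addnC; by have -> : (k - i.+1 = d)%N by lia.
Qed.

Lemma divX Q (a : R) (r0 N i : nat) :
  (size (Q * ('X - a%:P) ^+ r0.+1)%R <= N.+1)%N ->
  Q`_i = \sum_(i <= k < N)
     (Q * ('X - a%:P) ^+ r0.+1)`_k.+1 * 'C(k - i, r0)%:R * a ^+ (k - i - r0).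
Proof.
elim: r0 Q i => [|r0 IH] Q i.
  rewrite expr1 => /divX_base ->; apply: eq_big_nat => k _.
  by rewrite bin0 mulr1 subn0.
set Q1 := Q * ('X - a%:P).
have EP : Q * ('X - a%:P) ^+ r0.+2 = Q1 * ('X - a%:P) ^+ r0.+1 by rewrite /Q1 exprS mulrA.
rewrite EP => sP.
have sQ1 : (size (Q * ('X - a%:P))%R <= N.+1)%N.
  have [Q10|Q10] := eqVneq Q1 0; first by rewrite -/Q1 Q10 size_poly0.
  move: sP; rewrite size_Mmonic ?monic_exp ?monicXsubC // size_exp_XsubC.
  by rewrite -/Q1 addnS /=; lia.
rewrite (divX_base i sQ1) -/Q1.
transitivity (\sum_(i <= j < N) \sum_(j.+1 <= k < N)
   a ^+ (j - i) * ((Q1 * ('X - a%:P) ^+ r0.+1)`_k.+1 * 'C(k - j.+1, r0)%:R * a ^+ (k - j.+1 - r0))).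
  apply: eq_big_nat => j _; rewrite (IH Q1 j.+1 sP) mulr_suml.
  by apply: eq_big_nat => k _; rewrite mulrC.
rewrite tri_exch; apply: eq_big_nat => k /andP [ik kN].
transitivity (\sum_(i <= j < k) (Q1 * ('X - a%:P) ^+ r0.+1)`_k.+1 * a ^+ (k - i - r0.+1) * 'C(k - j.+1, r0)%:R).
  apply: eq_big_nat => j /andP [ij jk].
  have [small|big] := ltnP (k - j.+1) r0.
    by rewrite bin_small // !(mulr0, mul0r, mulr0n).
  have Ee : (k - i - r0.+1 = (j - i) + (k - j.+1 - r0))%N by lia.
  rewrite Ee exprD; ring.
by rewrite -mulr_sumr -natr_sum hockey mulrAC.
Qed.

End PolyPart.

Lemma blk_spec (s : seq nat) p : (p < sumn s)%N ->
  ((blk s p).1 < size s)%N /\ ((blk s p).2 < nth 0%N s (blk s p).1)%N.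
Proof.
elim: s p => [|k s IH] p //= hp.
case: ifP => [pk|pk] //=.
have hp' : (p - k < sumn s)%N by move/negbT: pk; rewrite -leqNgt; lia.
by have [h1 h2] := IH _ hp'.
Qed.

Section Seqs.
Variable R : comNzRingType.

Lemma prod_yrep n (y : n.-tuple R) (mu : seq nat) :
  \prod_(z <- yrep y mu) ('X - z%:P) =
  \prod_(i < n) ('X - (nth 0 y i)%:P) ^+ (nth 0%N mu i).
Proof.
rewrite /yrep big_flatten big_map.
have -> : iota 0 n = index_iota 0 n by rewrite /index_iota subn0.
rewrite big_mkord; apply: eq_bigr => i _.
by rewrite big_nseq iter_mulr_1.
Qed.

Lemma size_yrep n (y : n.-tuple R) (kappa : n.-tuple nat) :
  size (yrep y kappa) = sumn kappa.
Proof.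
rewrite /yrep size_flatten /shape -map_comp.
rewrite (eq_map (g := nth 0%N kappa)); last by move=> i /=; rewrite size_nseq.
by rewrite -{2}(mkseq_nth 0%N kappa) size_tuple.
Qed.

Lemma yrep_split n (y : n.-tuple R) (kappa : n.-tuple nat) q0 r :
  (q0 < n)%N -> (r <= nth 0%N kappa q0)%N ->
  \prod_(z <- yrep y kappa) ('X - z%:P) =
  \prod_(z <- yrep y (kappa_minus kappa q0 r)) ('X - z%:P) *
  ('X - (nth 0 y q0)%:P) ^+ r.
Proof.
move=> hq hr; rewrite !prod_yrep (bigD1 (Ordinal hq)) //= [in RHS](bigD1 (Ordinal hq)) //=.
have E (i : 'I_n) : nth 0%N (kappa_minus kappa q0 r) i
   = if (i : nat) == q0 then (nth 0%N kappa i - r)%N else nth 0%N kappa i.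
  by rewrite /kappa_minus (nth_map 0%N) ?size_iota // nth_iota.
rewrite (E (Ordinal hq)) /= eqxx [RHS]mulrC mulrA -exprD addnC subnK //.
congr (_ * _); apply: eq_bigr => i hi; rewrite E.
by have -> : ((i : nat) == q0) = false by apply/negbTE; move: hi; apply: contra => /eqP h; apply/eqP/val_inj.
Qed.

End Seqs.

Unset Implicit Arguments.

Theorem mainTheorem4 (R : comRingType) (n : nat) (kappa : n.-tuple nat)
  (y : n.-tuple R) :
  \det (Mmat y kappa) = \det (Gmat y kappa).
Proof.
set N := sumn kappa.
set P := \prod_(z <- yrep y kappa) ('X - z%:P).
have hsP : size P = N.+1 by rewrite size_prod_XsubC size_yrep.
set U : 'M[R]_N := \matrix_(i < N, j < N) (if (i <= j)%N then P`_(N - j + i) else 0).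
have hMU : Mmat y kappa = U *m Gmat y kappa.
  apply/matrixP => i p; rewrite !mxE /=.
  have [hq hr] := blk_spec (ltn_ord p).
  set q0 := (blk kappa p).1 in hq hr *; set r0 := (blk kappa p).2 in hr *.
  set a := nth 0 y q0.
  set cs := yrep y (kappa_minus kappa q0 r0.+1).
  set Q := \prod_(z <- cs) ('X - z%:P).
  have hq' : (q0 < n)%N by rewrite -(size_tuple kappa).
  have hPQ : P = Q * ('X - a%:P) ^+ r0.+1 by rewrite /P (yrep_split y hq' hr).
  have hsQ : size Q = (size cs).+1 by rewrite size_prod_XsubC.
  have hscs : (size cs + r0.+1 = N)%N.
    have : size P = (size Q + size (('X - a%:P) ^+ r0.+1)).-1.
      by rewrite hPQ size_Mmonic ?monic_exp ?monicXsubC // -size_poly_eq0 hsQ.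
    by rewrite hsP hsQ size_exp_XsubC; lia.
  transitivity (Q`_i).
    case: ifP => hi.
      rewrite coef_prod_XsubC; last by lia.
      by have -> : (N - i - r0 - 1 = size cs - i)%N by lia.
    by rewrite nth_default // hsQ; lia.
  rewrite (@divX _ Q a r0 N i); last by rewrite -hPQ hsP.
  rewrite -hPQ big_nat_rev /=.
  transitivity (\sum_(j < N) (if (i <= j)%N then P`_(N - j + i) else 0) *
     (if (j + r0 < N)%N then 'C(N - j - 1, r0)%:R * a ^+ (N - j - r0 - 1) else 0)); last first.
    by apply: eq_bigr => j _; rewrite !mxE.
  rewrite -(big_mkord xpredT (fun j => (if (i <= j)%N then P`_(N - j + i) else 0) *
     (if (j + r0 < N)%N then 'C(N - j - 1, r0)%:R * a ^+ (N - j - r0 - 1) else 0))).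
  rewrite (@big_cat_nat _ _ _ i 0 N _ _ (leq0n i) (ltnW (ltn_ord i))) /=.
  rewrite [X in _ = X + _]big_nat_cond [X in _ = X + _]big1 ?add0r; last first.
    by move=> j /andP [/andP [_ ji] _]; rewrite leqNgt ji mul0r.
  apply: eq_big_nat => j /andP [ij jN].
  rewrite ij.
  have -> : ((i + N - j.+1).+1 = N - j + i)%N by lia.
  have -> : (i + N - j.+1 - i = N - j - 1)%N by lia.
  have -> : (N - j - 1 - r0 = N - j - r0 - 1)%N by lia.
  case: ifP => hj; first by rewrite mulrA.
  move/negbT: hj; rewrite -leqNgt => hj.
  by rewrite bin_small ?mulr0n ?mulr0 ?mul0r //; lia.
rewrite hMU det_mulmx -det_tr det_trig; last first.
  by apply/is_trig_mxP => i j ij; rewrite !mxE leqNgt ij.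
rewrite big1 ?mul1r // => i _; rewrite !mxE leqnn subnK; last exact: ltnW (ltn_ord i).
have : P \is monic by apply: monic_prod_XsubC.
by move/monicP; rewrite lead_coefE hsP.
Qed.
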